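(* Let $V^{10},V^{01}$ be nonzero Euclidean spaces and $S^{00},S^{10},S^{01},S^{11}$ nonzero Euclidean spaces such that $S^{00}\oplus S^{10}$ and $S^{01}\oplus S^{11}$ are $\mathrm{Cl}(V^{10})$-modules and $S^{00}\oplus S^{01}$ and $S^{10}\oplus S^{11}$ are $\mathrm{Cl}(V^{01})$-modules. Consider the rank 4 Clifford quasiNil-algebra $\mathcal N$ with $\mathcal N_{12}=V^{10},\mathcal N_{13}=S^{10},\mathcal N_{14}=S^{11},\mathcal N_{23}=S^{00},\mathcal N_{24}=S^{01},\mathcal N_{34}=V^{01}$ and products $\mu_{123}(v,s)=vs$, $\mu_{124}(v,s)=vs$, $\mu_{234}(s,w)=ws$, $\mu_{134}(s,w)=ws$. Then $\mathcal N$ is associative if and only if the actions of $V^{10}$ and $V^{01}$ on $S=S^{00}\oplus S^{10}\oplus S^{01}\oplus S^{11}$ commute, i.e. if and only if these actions extend to a $\mathbb Z/2\times\mathbb Z/2$-graded module structure on $S$ over $\mathrm{Cl}(V^{10})\otimes\mathrm{Cl}(V^{01})$ (ordinary tensor product, with $V^{10}$ of bidegree $(1,0)$ and $V^{01}$ of bidegree $(0,1)$). Conversely, every such bigraded module (with a metric making the four summands orthogonal and all elements of $V^{10}\cup V^{01}$ skew-symmetric) yields in this way an associative Clifford quasiNil-algebra.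
   Context: All spaces finite-dimensional real. $\mathrm{Cl}(X)$ is the Clifford algebra of a Euclidean space $X$ with $x\cdot x=-|x|^2$. A ''$\mathrm{Cl}(X)$-module $Y\oplus Z$'' is a $\mathbb Z/2$-graded module ($XY\subset Z$, $XZ\subset Y$) with a Euclidean metric with $Y\perp Z$ and each $x\in X$ skew-symmetric. A quasiNil-algebra of rank $n$: Euclidean space $\bigoplus_{i<j}\mathcal N_{ij}$ (orthogonal) with bilinear maps $\mu_{ijk}:\mathcal N_{ij}\times\mathcal N_{jk}\to\mathcal N_{ik}$ satisfying $|\mu_{ijk}(x,y)|=|x||y|$, and product $(AB)_{ik}=\sum_j\mu_{ijk}(a_{ij},b_{jk})$ on strictly upper triangular matrices $(a_{ij})$, $a_{ij}\in\mathcal N_{ij}$; associative means $(AB)C=A(BC)$ for all $A,B,C$. *)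

(* Defs.v *)
From HB Require Import structures.
From mathcomp Require Import all_boot all_order all_algebra.
From mathcomp Require Import reals.
Set Implicit Arguments. Unset Strict Implicit. Unset Printing Implicit Defensive.
Import Order.TTheory GRing.Theory Num.Theory.
Local Open Scope ring_scope.

(* A finite-dimensional Euclidean space of dimension n is modelled as 'rV[R]_n
   with the standard inner product. *)
Definition dot (R : realType) (n : nat) (u v : 'rV[R]_n) : R := (u *m v^T) 0 0.
Definition enorm (R : realType) (n : nat) (u : 'rV[R]_n) : R := Num.sqrt (dot u u).

(* A Cl(X)-module Y (+) Z, X = R^p, Y = R^m, Z = R^k (Y _|_ Z):
   x acts on y in Y by  y *m a x  (in Z) and on z in Z by  z *m b x  (in Y);
   x |-> action is linear, x.x = -|x|^2 on Y (+) Z, and each x is skew-symmetric. *)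
Definition cl_module (R : realType) (p m k : nat)
    (a : 'rV[R]_p -> 'M[R]_(m, k)) (b : 'rV[R]_p -> 'M[R]_(k, m)) : Prop :=
  [/\ (forall (c : R) x y, a (c *: x + y) = c *: a x + a y),
      (forall (c : R) x y, b (c *: x + y) = c *: b x + b y),
      (forall x, a x *m b x = (- dot x x) *: (1%:M : 'M[R]_m)),
      (forall x, b x *m a x = (- dot x x) *: (1%:M : 'M[R]_k)) &
      (forall x (y : 'rV[R]_m) (z : 'rV[R]_k), dot (y *m a x) z = - dot y (z *m b x))].

Definition bilinear_map (R : realType) (p q r : nat)
    (f : 'rV[R]_p -> 'rV[R]_q -> 'rV[R]_r) : Prop :=
  (forall (c : R) x x' y, f (c *: x + x') y = c *: f x y + f x' y) /\
  (forall (c : R) x y y', f x (c *: y + y') = c *: f x y + f x y').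

Definition norm_mult (R : realType) (p q r : nat)
    (f : 'rV[R]_p -> 'rV[R]_q -> 'rV[R]_r) : Prop :=
  forall x y, enorm (f x y) = enorm x * enorm y.

(* Rank-4 quasiNil-algebra: strictly upper triangular 4x4 "matrices"
   with entries a_ij in N_ij = R^(d_ij). *)
Record elt4 (R : realType) (d12 d13 d14 d23 d24 d34 : nat) := E4 {
  e12 : 'rV[R]_d12; e13 : 'rV[R]_d13; e14 : 'rV[R]_d14;
  e23 : 'rV[R]_d23; e24 : 'rV[R]_d24; e34 : 'rV[R]_d34 }.

Definition mul4 (R : realType) (d12 d13 d14 d23 d24 d34 : nat)
    (m123 : 'rV[R]_d12 -> 'rV[R]_d23 -> 'rV[R]_d13)
    (m124 : 'rV[R]_d12 -> 'rV[R]_d24 -> 'rV[R]_d14)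
    (m134 : 'rV[R]_d13 -> 'rV[R]_d34 -> 'rV[R]_d14)
    (m234 : 'rV[R]_d23 -> 'rV[R]_d34 -> 'rV[R]_d24)
    (A B : elt4 R d12 d13 d14 d23 d24 d34) : elt4 R d12 d13 d14 d23 d24 d34 :=
  E4 0 (m123 (e12 A) (e23 B))
       (m124 (e12 A) (e24 B) + m134 (e13 A) (e34 B))
       0 (m234 (e23 A) (e34 B)) 0.

Definition is_quasiNil4 (R : realType) (d12 d13 d14 d23 d24 d34 : nat)
    (m123 : 'rV[R]_d12 -> 'rV[R]_d23 -> 'rV[R]_d13)
    (m124 : 'rV[R]_d12 -> 'rV[R]_d24 -> 'rV[R]_d14)
    (m134 : 'rV[R]_d13 -> 'rV[R]_d34 -> 'rV[R]_d14)
    (m234 : 'rV[R]_d23 -> 'rV[R]_d34 -> 'rV[R]_d24) : Prop :=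
  [/\ bilinear_map m123, bilinear_map m124, bilinear_map m134 & bilinear_map m234] /\
  [/\ norm_mult m123, norm_mult m124, norm_mult m134 & norm_mult m234].

Definition associative4 (R : realType) (d12 d13 d14 d23 d24 d34 : nat)
    (m123 : 'rV[R]_d12 -> 'rV[R]_d23 -> 'rV[R]_d13)
    (m124 : 'rV[R]_d12 -> 'rV[R]_d24 -> 'rV[R]_d14)
    (m134 : 'rV[R]_d13 -> 'rV[R]_d34 -> 'rV[R]_d14)
    (m234 : 'rV[R]_d23 -> 'rV[R]_d34 -> 'rV[R]_d24) : Prop :=
  forall A B C : elt4 R d12 d13 d14 d23 d24 d34,
    mul4 m123 m124 m134 m234 (mul4 m123 m124 m134 m234 A B) C
    = mul4 m123 m124 m134 m234 A (mul4 m123 m124 m134 m234 B C).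

(* Actions on S = (S00 (+) S10) (+) (S01 (+) S11), as block matrices
   (row-vector convention: s |-> s *m M). *)
Definition actV10 (R : realType) (p n00 n10 n01 n11 : nat)
    (A1 : 'rV[R]_p -> 'M[R]_(n00, n10)) (B1 : 'rV[R]_p -> 'M[R]_(n10, n00))
    (A2 : 'rV[R]_p -> 'M[R]_(n01, n11)) (B2 : 'rV[R]_p -> 'M[R]_(n11, n01))
    (v : 'rV[R]_p) : 'M[R]_((n00 + n10) + (n01 + n11)) :=
  block_mx (block_mx 0 (A1 v) (B1 v) 0) 0 0 (block_mx 0 (A2 v) (B2 v) 0).

Definition actV01 (R : realType) (q n00 n10 n01 n11 : nat)
    (C1 : 'rV[R]_q -> 'M[R]_(n00, n01)) (D1 : 'rV[R]_q -> 'M[R]_(n01, n00))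
    (C2 : 'rV[R]_q -> 'M[R]_(n10, n11)) (D2 : 'rV[R]_q -> 'M[R]_(n11, n10))
    (w : 'rV[R]_q) : 'M[R]_((n00 + n10) + (n01 + n11)) :=
  block_mx 0 (block_mx (C1 w) 0 0 (C2 w)) (block_mx (D1 w) 0 0 (D2 w)) 0.

(* Main.v *)
Require Import Defs.
From HB Require Import structures.
From mathcomp Require Import all_boot all_order all_algebra.
From mathcomp Require Import reals.
Import Order.TTheory GRing.Theory Num.Theory.
Local Open Scope ring_scope.

Section H.
Variable R : realType.

Lemma dot_ge0 n (u : 'rV[R]_n) : 0 <= dot u u.
Proof.
rewrite /dot !mxE; apply: sumr_ge0 => i _; rewrite mxE; rewrite -expr2; exact: sqr_ge0.
Qed.

Lemma dot_eq0 n (u : 'rV[R]_n) : dot u u = 0 -> u = 0.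
Proof.
rewrite /dot mxE => H; apply/rowP => i; rewrite mxE.
have Hn : forall j, xpredT j -> 0 <= u 0 j * u^T j 0.
  move=> j _; rewrite mxE; rewrite -expr2; exact: sqr_ge0.
have := @psumr_eq0P _ _ xpredT (fun j => u 0 j * u^T j 0) Hn H i isT.
rewrite mxE => E; apply/eqP; rewrite -[_ == 0]orbb -mulf_eq0 E.
by [].
Qed.

Lemma dotZr n (u v : 'rV[R]_n) c : dot u (c *: v) = c * dot u v.
Proof. by rewrite /dot linearZ /= -scalemxAr mxE. Qed.

Variables (p m k : nat) (a : 'rV[R]_p -> 'M[R]_(m, k)) (b : 'rV[R]_p -> 'M[R]_(k, m)).
Hypothesis H : cl_module a b.

Lemma cl_a0 : a 0 = 0.
Proof.
case: H => la _ _ _ _; have := la 1 0 0; rewrite !scale1r addr0 => E.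
by apply: (addrI (a 0)); rewrite addr0 -E.
Qed.

Lemma cl_b0 : b 0 = 0.
Proof.
case: H => _ lb _ _ _; have := lb 1 0 0; rewrite !scale1r addr0 => E.
by apply: (addrI (b 0)); rewrite addr0 -E.
Qed.

Lemma cl_norm x (s : 'rV[R]_m) : enorm (s *m a x) = enorm x * enorm s.
Proof.
case: H => _ _ ab _ sk.
rewrite /enorm sk -mulmxA ab scalemx1 mul_mx_scalar dotZr mulNr opprK.
by rewrite sqrtrM ?dot_ge0.
Qed.

Lemma cl_bil1 : bilinear_map (fun x (s : 'rV[R]_m) => s *m a x).
Proof.
case: H => la _ _ _ _; split=> c x x' y.
  by rewrite la mulmxDr scalemxAr.
by rewrite mulmxDl scalemxAl.
Qed.

Lemma cl_bil2 : bilinear_map (fun (s : 'rV[R]_m) x => s *m a x).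
Proof.
case: H => la _ _ _ _; split=> c x x' y.
  by rewrite mulmxDl scalemxAl.
by rewrite la mulmxDr scalemxAr.
Qed.

Lemma cancel_sandwich n1 n2 n3 n4 (P : 'M[R]_(n1,n2)) (Q : 'M[R]_(n2,n1))
  (P' : 'M[R]_(n4,n3)) (Q' : 'M[R]_(n3,n4)) (M : 'M[R]_(n2,n3)) (N : 'M[R]_(n1,n4)) (d : R) :
  Q *m P = d *: 1%:M -> P' *m Q' = d *: 1%:M -> (d = 0 -> Q = 0 /\ Q' = 0) ->
  P *m M = N *m P' -> M *m Q' = Q *m N.
Proof.
rewrite !scalemx1 => QP PQ d0 E.
have E2 : d *: (M *m Q') = d *: (Q *m N).
  by rewrite -mul_scalar_mx -mul_mx_scalar -QP -PQ !mulmxA -(mulmxA Q) E -!mulmxA.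
have [d00|dn0] := eqVneq d 0.
  by case: (d0 d00) => -> ->; rewrite mulmx0 mul0mx.
exact: scalerI dn0 _ _ E2.
Qed.

End H.
Arguments cl_a0 {R p m k a b}.
Arguments cl_b0 {R p m k a b}.
Arguments cl_norm {R p m k a b}.
Arguments cl_bil1 {R p m k a b}.
Arguments cl_bil2 {R p m k a b}.
Arguments dot_eq0 {R n u}.
Arguments cancel_sandwich {R n1 n2 n3 n4 P Q P' Q' M N d}.

Theorem mainTheorem12 (R : realType) (p q n00 n10 n01 n11 : nat)
    (A1 : 'rV[R]_p -> 'M[R]_(n00, n10)) (B1 : 'rV[R]_p -> 'M[R]_(n10, n00))
    (A2 : 'rV[R]_p -> 'M[R]_(n01, n11)) (B2 : 'rV[R]_p -> 'M[R]_(n11, n01))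
    (C1 : 'rV[R]_q -> 'M[R]_(n00, n01)) (D1 : 'rV[R]_q -> 'M[R]_(n01, n00))
    (C2 : 'rV[R]_q -> 'M[R]_(n10, n11)) (D2 : 'rV[R]_q -> 'M[R]_(n11, n10)) :
  (0 < p)%N -> (0 < q)%N ->
  (0 < n00)%N -> (0 < n10)%N -> (0 < n01)%N -> (0 < n11)%N ->
  cl_module A1 B1 -> cl_module A2 B2 -> cl_module C1 D1 -> cl_module C2 D2 ->
  let m123 := fun (v : 'rV[R]_p) (s : 'rV[R]_n00) => s *m A1 v in
  let m124 := fun (v : 'rV[R]_p) (s : 'rV[R]_n01) => s *m A2 v in
  let m234 := fun (s : 'rV[R]_n00) (w : 'rV[R]_q) => s *m C1 w in
  let m134 := fun (s : 'rV[R]_n10) (w : 'rV[R]_q) => s *m C2 w in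
  is_quasiNil4 m123 m124 m134 m234 /\
  (associative4 m123 m124 m134 m234 <->
   forall (v : 'rV[R]_p) (w : 'rV[R]_q),
     actV10 A1 B1 A2 B2 v *m actV01 C1 D1 C2 D2 w
     = actV01 C1 D1 C2 D2 w *m actV10 A1 B1 A2 B2 v).
Proof.
move=> _ _ _ _ _ _ HA1 HA2 HC1 HC2 m123 m124 m234 m134.
split.
  split; split.
  - exact: cl_bil1 HA1.
  - exact: cl_bil1 HA2.
  - exact: cl_bil2 HC2.
  - exact: cl_bil2 HC1.
  - by move=> x y; rewrite /m123 (cl_norm HA1).
  - by move=> x y; rewrite /m124 (cl_norm HA2).
  - by move=> x y; rewrite /m134 (cl_norm HC2) mulrC.
  - by move=> x y; rewrite /m234 (cl_norm HC1) mulrC.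
have zA1 := cl_a0 HA1; have zA2 := cl_a0 HA2; have zC1 := cl_a0 HC1; have zC2 := cl_a0 HC2.
have key : associative4 m123 m124 m134 m234 <->
   (forall v w, A1 v *m C2 w = C1 w *m A2 v).
  split.
    move=> As v w; apply/row_matrixP => i; rewrite !rowE !mulmxA.
    have := congr1 (@e14 _ _ _ _ _ _ _)
      (As (E4 v 0 0 0 0 0) (E4 0 0 0 ('e_i) 0 0) (E4 0 0 0 0 0 w)).
    by rewrite /mul4 /= /m123 /m124 /m134 /m234 zA2 zC2 !mulmx0 !add0r !addr0.
  move=> E [a12 a13 a14 a23 a24 a34] [b12 b13 b14 b23 b24 b34] [c12 c13 c14 c23 c24 c34].
  rewrite /mul4 /= /m123 /m124 /m134 /m234 zA1 zA2 zC1 zC2 !mulmx0 !mul0mx !add0r !addr0.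
  by rewrite -mulmxA E mulmxA.
rewrite key; split.
  move=> E v w.
  have [_ _ A1B1 B1A1 _] := HA1; have [_ _ A2B2 B2A2 _] := HA2.
  have [_ _ C1D1 D1C1 _] := HC1; have [_ _ C2D2 D2C2 _] := HC2.
  have dv : - dot v v = 0 -> B1 v = 0 /\ B2 v = 0.
    move/eqP; rewrite oppr_eq0 => /eqP/dot_eq0 ->.
    by rewrite (cl_b0 HA1) (cl_b0 HA2).
  have dw : - dot w w = 0 -> D1 w = 0 /\ D2 w = 0.
    move/eqP; rewrite oppr_eq0 => /eqP/dot_eq0 ->.
    by rewrite (cl_b0 HC1) (cl_b0 HC2).
  have F1 : C2 w *m B2 v = B1 v *m C1 w.
    exact: (cancel_sandwich (B1A1 v) (A2B2 v) dv (E v w)).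
  have F2 : A2 v *m D2 w = D1 w *m A1 v.
    exact: (cancel_sandwich (D1C1 w) (C2D2 w) dw (esym (E v w))).
  have F3 : D2 w *m B1 v = B2 v *m D1 w.
    exact: (cancel_sandwich (B2A2 v) (A1B1 v) (fun h => let: conj x y := dv h in conj y x) F2).
  rewrite /actV10 /actV01 !mulmx_block !mul0mx !mulmx0 !add0r !addr0.
  by rewrite E F1 F2 F3.
move=> Cm v w; have := Cm v w.
rewrite /actV10 /actV01 !mulmx_block !mul0mx !mulmx0 !add0r !addr0.
by case/eq_block_mx => _ /eq_block_mx [_ -> _ _].
Qed.
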